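(* Every statistically compact metric space is compact.
   Context: For $A\subseteq\mathbb{N}$ let $d_n(A)=|A\cap\{1,\dots,n\}|/n$, $\overline{d}(A)=\limsup_n d_n(A)$, $\underline{d}(A)=\liminf_n d_n(A)$, and $d(A)$ their common value when equal. A sequence in $X$ is a map from an infinite subset $M\subseteq\mathbb{N}$ into $X$, written $(x_n)_{n\in M}$; a subsequence is $(x_n)_{n\in N}$ with $N\subseteq M$ infinite. It is nonthin if $\overline{d}(M)>0$. A nonthin sequence $(x_n)_{n\in M}$ is statistically convergent to $a\in X$ if for every open $U\ni a$, $d(\{n\in M:x_n\notin U\})=0$. A topological space $X$ is statistically compact if every nonthin sequence in $X$ has a nonthin subsequence that is statistically convergent to some point of $X$. *)

(* Defs.v *)
From HB Require Import structures.
From mathcomp Require Import all_boot all_order all_algebra.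
From mathcomp Require Import all_classical all_reals all_analysis.
Set Implicit Arguments. Unset Strict Implicit. Unset Printing Implicit Defensive.
Import Order.TTheory GRing.Theory Num.Theory.
Import numFieldNormedType.Exports.
Local Open Scope classical_set_scope.
Local Open Scope ring_scope.

Definition dens_n (R : realType) (A : set nat) (n : nat) : R :=
  (\sum_(1 <= i < n.+1) (asbool (A i))%:R) / n%:R.

Definition upper_dens (R : realType) (A : set nat) : \bar R :=
  limn_esup (fun n => (dens_n R A n)%:E).

Definition dens_zero (R : realType) (A : set nat) : Prop :=
  dens_n R A @ \oo --> (0 : R).

(* A sequence in X is a pair (M, x) with M an infinite subset of nat and
   x : nat -> X (only the values on M matter).  It is nonthin if
   \overline{d}(M) > 0 (which forces M to be infinite). *)
Definition nonthin (R : realType) (M : set nat) : Prop :=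
  infinite_set M /\ (0 < upper_dens R M)%E.

Definition stat_conv (R : realType) (X : topologicalType)
    (M : set nat) (x : nat -> X) (a : X) : Prop :=
  nonthin R M /\
  forall U : set X, open U -> U a -> dens_zero R [set n | M n /\ ~ U (x n)].

Definition stat_compact (R : realType) (X : topologicalType) : Prop :=
  forall (M : set nat) (x : nat -> X), nonthin R M ->
    exists N : set nat, N `<=` M /\ nonthin R N /\
      exists a : X, stat_conv R N x a.

(* Main.v *)
Require Import Defs.
From HB Require Import structures.
From mathcomp Require Import all_boot all_order all_algebra.
From mathcomp Require Import all_classical all_reals all_analysis.
From mathcomp Require Import zify.
Set Implicit Arguments. Unset Strict Implicit. Unset Printing Implicit Defensive.
Import Order.TTheory GRing.Theory Num.Theory.
Import numFieldNormedType.Exports.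
Local Open Scope classical_set_scope.
Local Open Scope ring_scope.

Lemma cnt_bound (N A : set nat) (m : nat) :
  (forall n, (m <= n)%N -> N n -> A n) -> forall n,
  (\sum_(1 <= i < n.+1) (asbool (N i) : nat) <=
   \sum_(1 <= i < n.+1) (asbool (A i) : nat) + minn n m)%N.
Proof.
move=> NA; elim=> [|n IH]; first by rewrite !big_geq.
rewrite !(big_nat_recr n.+1) //=.
case: (leqP m n.+1) => hm.
  have : (asbool (N n.+1) <= asbool (A n.+1))%N.
    case: (asboolP (N n.+1)) => // /(NA _ hm) An.
    by case: asboolP.
  move=> h; have : (minn n m <= minn n.+1 m)%N by lia.
  lia.
have : (asbool (N n.+1) <= 1)%N by case: asboolP.
move=> h; have : (minn n.+1 m = (minn n m).+1)%N by lia.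
lia.
Qed.

Lemma dens_bound (R : realType) (N A : set nat) (m : nat) :
  (forall n, (m <= n)%N -> N n -> A n) -> forall n,
  dens_n R N n <= dens_n R A n + m%:R / n%:R.
Proof.
move=> NA n; rewrite /dens_n -mulrDl ler_wpM2r ?invr_ge0 ?ler0n //.
rewrite -!natr_sum -natrD ler_nat.
apply: (leq_trans (cnt_bound NA n)); rewrite leq_add2l; lia.
Qed.


Lemma nonthin_setT (R : realType) : nonthin R [set: nat].
Proof.
split; first exact: infinite_nat.
have -> : upper_dens R [set: nat] = 1%E.
  rewrite /upper_dens; apply: (cvg_limn_einf_sup _).2.
  apply: (cvg_near_cst 1%E); near=> n.
  have n0 : (0 < n)%N by near: n; exists 1%N.
  rewrite /dens_n.
  rewrite (eq_bigr (fun _ => 1)); last by move=> i _; rewrite asboolT.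
  idtac.
  idtac.
  rewrite sumr_const_nat subn1 /= divff //.
  by rewrite pnatr_eq0 -lt0n.
by rewrite lte01.
Unshelve. all: by end_near. Qed.

Lemma m_over_n (R : realType) (m : nat) (e : R) : 0 < e ->
  \forall n \near \oo, (m%:R / n%:R : R) < e.
Proof.
move=> e0; exists (Num.truncn (m%:R / e)).+1 => // n /= kn.
have n0 : (0 < n)%N by apply: leq_trans kn.
rewrite ltr_pdivrMr ?ltr0n // mulrC -ltr_pdivrMr //.
apply: (lt_le_trans (truncnS_gt _)); by rewrite ler_nat.
Qed.

Lemma statA (R : realType) (X : topologicalType) : stat_compact R X ->
  forall x : nat -> X, exists a : X, forall U, nbhs a U ->
  forall m, exists n, (m <= n)%N /\ U (x n).
Proof.
move=> H x; have [N [_ [[_ Npos] [a [_ conv]]]]] := H setT x (nonthin_setT R).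
exists a => U aU m; apply: contrapT => hn.
pose A := [set n | N n /\ ~ U° (x n)].
have NA : forall n, (m <= n)%N -> N n -> A n.
  move=> n mn Nn; split => // Uxn; apply: hn; exists n; split => //.
  exact: interior_subset.
have dz := conv _ (@open_interior _ U) aU.
suff : (upper_dens R N <= 0)%E by rewrite leNgt Npos.
apply/lee_addgt0Pr => e e0; rewrite add0e.
have e20 : 0 < e / 2 by rewrite divr_gt0.
have dz2 : dens_n R A @ \oo --> (0:R) := dz.
have h1 : \forall t \near \oo, `|0 - dens_n R A t| < e / 2.
  exact: (cvgr_dist_lt _ _ dz2).

have h2 := m_over_n m e20.
have [k _ hk] := filterI h1 h2.
rewrite /upper_dens /limn_esup /limf_esup.
apply: (@le_trans _ _ (ereal_sup ((fun n => (dens_n R N n)%:E) @` [set n | (k <= n)%N]))).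
  apply: ereal_inf_lbound; exists [set n | (k <= n)%N] => //; by exists k.
apply: ge_ereal_sup => _ [n kn <-]; rewrite lee_fin.
have [hA hm] := hk n kn.
rewrite sub0r normrN in hA.
apply: le_trans; first exact: (dens_bound R NA n).
rewrite [e](splitr e) ltW // ltrD //.
by apply: le_lt_trans hA; exact: ler_norm.
Qed.


Lemma stepB (R : realType) (X : metricType R) :
  (forall x : nat -> X, exists a : X, forall U, nbhs a U ->
     forall m, exists n, (m <= n)%N /\ U (x n)) ->
  compact [set: X].
Proof.
move=> H; rewrite compact_ultra => F FU _.
have B1 : forall r : R, 0 < r -> exists c, F (ball c r).
  move=> r r0; apply: contrapT => nb.
  have Fc : forall c, F (~` ball c r).
    move=> c; case: (in_ultra_setVsetC (ball c r) FU) => // h.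
    by exfalso; apply: nb; exists c.
  have g0 : forall s : seq X, exists y, forall c, c \in s -> ~ ball c r y.
    move=> s; suff : F [set y | forall c, c \in s -> ~ ball c r y].
      by move/filter_ex => [y hy]; exists y.
    elim: s => [|c s IH]; first by apply: filterS filterT.
    apply: filterS (filterI (Fc c) IH) => y [h1 h2] c'.
    by rewrite in_cons => /orP[/eqP->|/h2].
  pose g s := projT1 (cid (g0 s)).
  have gP : forall s c, c \in s -> ~ ball c r (g s).
    by move=> s; exact: (projT2 (cid (g0 s))).
  pose L := fix L n := if n is n'.+1 then g (L n') :: L n' else [::].
  pose x n := g (L n).
  have Lin : forall n i, (i < n)%N -> x i \in L n.
    elim=> [//|n IH] i; rewrite ltnS leq_eqVlt => /orP[/eqP->|/IH h].
      by rewrite /= in_cons eqxx.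
    by rewrite /= in_cons h orbT.
  have [a ha] := H x.
  have r20 : 0 < r / 2 by rewrite divr_gt0.
  have [n1 [_ h1]] := ha _ (nbhsx_ballx a _ r20) 0%N.
  have [n2 [le h2]] := ha _ (nbhsx_ballx a _ r20) n1.+1.
  apply: (gP _ _ (Lin _ _ le)); rewrite -/(x n2) [r]splitr.
  exact: ball_triangle (ball_sym h1) h2.
have B1' : forall k : nat, exists y : X, F (ball y (k.+1%:R^-1)).
  by move=> k; apply: B1; rewrite invr_gt0 ltr0n.
have [c hc] := choice B1'.
have [a ha] := H c.
exists a; split => //.
move=> U /nbhs_ballP [e /= e0 sU].
have e20 : 0 < e / 2 by rewrite divr_gt0.
have hh : \forall k \near \oo, `|0 - @harmonic R k| < e / 2.
  exact: (cvgr_dist_lt _ _ cvg_harmonic).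
have [m _ hm] := hh.
have [n [mn hn]] := ha _ (nbhsx_ballx a _ e20) m.
apply: filterS (hc n) => y hy; apply: sU; rewrite [e]splitr.
apply: ball_triangle hn _; apply: le_ball hy.
have := hm n mn; rewrite /= sub0r normrN ger0_norm ?invr_ge0 ?ler0n //.
exact: ltW.
Qed.

Theorem mainTheorem7 (R : realType) (X : metricType R) :
  stat_compact R X -> compact [set: X].
Proof. by move=> H; apply: stepB; exact: statA H. Qed.
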